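(* Let $X$ be a real reflexive Banach space, and let $\mathcal{H}$, $\mathcal{A}$, $\mathcal{H}_{\ast\le}$, $\mathcal{H}_{\ast\ge}$ be as in the context. Then: (i) $\mathcal{A}$ maps $\mathcal{H}$ into $\mathcal{H}_{\ast\le}$, and the map $h\mapsto(\mathcal{A}h)^{\ast}\circ i$ maps $\mathcal{H}$ into $\mathcal{H}_{\ast\ge}$. (ii) The set of fixed points of $\mathcal{A}$ is $\{h\in\mathcal{H}_{\ast\le}: h^{\ast}\circ i=h \text{ on } \mathrm{dom}(h)\}$. (iii) For every $h\in\mathcal{H}$ and every $n\ge1$, $\mathrm{dom}(\mathcal{A}^n h)=\mathrm{dom}(h)\cap\mathrm{dom}(h^{\ast}\circ i)$. (iv) For every $h\in\mathcal{H}$, the sequences $\{\mathcal{A}^n h\}_{n\ge1}\subset\mathcal{H}_{\ast\le}$ and $\{(\mathcal{A}^n h)^{\ast}\circ i\}_{n\ge1}\subset\mathcal{H}_{\ast\ge}$ are pointwise non-increasing and non-decreasing, respectively. Their pointwise limit $\mathcal{A}^{\infty}h:=\lim_{n}\mathcal{A}^n h$ satisfies $\mathrm{dom}(\mathcal{A}^{\infty}h)=\mathrm{dom}(h)\cap\mathrm{dom}(h^{\ast}\circ i)$, and if $\mathcal{A}^{\infty}h$ is lower semicontinuous then it is a fixed point of $\mathcal{A}$. (v) For every $h\in\mathcal{H}$ and every $n\ge1$, $(\mathcal{A}^n h)^{\ast}\circ i\le\mathcal{A}^{\infty}h\le\mathcal{A}^n h$. (vi) For every $h\in\mathcal{H}$,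 the sequence $\{(\mathcal{A}^n h)^{\ast}\circ i\}_{n\ge1}$ converges pointwise to $\mathcal{A}^{\infty}h$ on $\mathrm{dom}(h)\cap\mathrm{dom}(h^{\ast}\circ i)$. (vii) If $T:X\rightrightarrows X^{\ast}$ is maximally monotone, $h\in\mathcal{H}(T)$, and $\mathcal{A}^{\infty}h$ is lower semicontinuous, then $\mathcal{A}^{\infty}h\in\mathcal{H}(T)$.
   Context: $X^{\ast}$ is the dual of $X$ with pairing $\langle\cdot,\cdot\rangle$. The dual of $X\times X^{\ast}$ is identified with $X^{\ast}\times X$ via $\langle (x,x^{\ast}),(y^{\ast},y)\rangle=\langle x,y^{\ast}\rangle+\langle y,x^{\ast}\rangle$; for $g:X\times X^{\ast}\to\mathbb{R}\cup\{+\infty\}$, its conjugate is $g^{\ast}(y^{\ast},y)=\sup_{(x,x^{\ast})}\{\langle x,y^{\ast}\rangle+\langle y,x^{\ast}\rangle-g(x,x^{\ast})\}$. Let $i:X\times X^{\ast}\to X^{\ast}\times X$, $i(x,x^{\ast})=(x^{\ast},x)$, so $g^{\ast}\circ i$ is a function on $X\times X^{\ast}$. For a maximally monotone $T:X\rightrightarrows X^{\ast}$, $\mathcal{H}(T)$ is the family of lower semicontinuous convex functions $h:X\times X^{\ast}\to\mathbb{R}\cup\{+\infty\}$ with $h(x,x^{\ast})\ge\langle x,x^{\ast}\rangle$ everywhere and $h(x,x^{\ast})=\langle x,x^{\ast}\rangle$ whenever $x^{\ast}\in T(x)$. $\mathcal{H}:=\bigcup\{\mathcal{H}(T): T \text{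 maximally monotone}\}$. The map $\mathcal{A}:\mathcal{H}\to\mathcal{H}$ is $\mathcal{A}h:=\tfrac12(h+h^{\ast}\circ i)$ (it is known that $\mathcal{A}h\in\mathcal{H}(T)$ whenever $h\in\mathcal{H}(T)$), and $\mathcal{A}^n$ denotes its $n$-th iterate. $\mathcal{H}_{\ast\le}:=\{h\in\mathcal{H}: h^{\ast}\circ i\le h\}$ and $\mathcal{H}_{\ast\ge}:=\{h\in\mathcal{H}: h^{\ast}\circ i\ge h\}$. $\mathrm{dom}(g)=\{z: g(z)<+\infty\}$. *)

(* Defs.v *)
From HB Require Import structures.
From mathcomp Require Import all_boot all_order all_algebra.
From mathcomp Require Import all_classical all_reals all_analysis.
Set Implicit Arguments. Unset Strict Implicit. Unset Printing Implicit Defensive.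
Import Order.TTheory GRing.Theory Num.Theory.
Import numFieldNormedType.Exports.
Local Open Scope classical_set_scope.
Local Open Scope ring_scope.

Section Defs.
Variables (R : realType) (X : normedModType R).

(* The (topological) dual X^* : continuous (= bounded) linear functionals. *)
Definition is_dual_fun (f : X -> R) :=
  (forall (a : R) (x y : X), f (a *: x + y) = a * f x + f y) /\
  (exists M : R, forall x : X, `|f x| <= M * `|x|).

Record dual := Dual { dfun :> X -> R ; dfunP : is_dual_fun dfun }.

Definition pairing (x : X) (f : dual) : R := f x.

Definition ddist (f g : dual) : R :=
  sup [set `|f x - g x| | x in [set x : X | `|x| <= 1]].
Definition dnorm (f : dual) : R :=
  sup [set `|f x| | x in [set x : X | `|x| <= 1]].

Definition reflexive_space :=
  forall phi : dual -> R,
    (forall (a : R) (f g z : dual), (forall x, z x = a * f x + g x) ->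
       phi z = a * phi f + phi g) ->
    (exists M : R, forall f, `|phi f| <= M * dnorm f) ->
    exists x : X, forall f, phi f = f x.

(* functions X x X^* -> R \cup {+oo} (values in \bar R) *)
Local Open Scope ereal_scope.

Definition lsc (h : X * dual -> \bar R) :=
  forall p : X * dual, forall r : R, r%:E < h p ->
    exists2 d : R, (0 < d)%R & forall q : X * dual,
      (`|q.1 - p.1| < d)%R -> (ddist q.2 p.2 < d)%R -> r%:E < h q.

(* convexity of an extended-valued function (epigraph convexity) *)
Definition convexf (h : X * dual -> \bar R) :=
  forall (p q z : X * dual) (t : R), (0 <= t <= 1)%R ->
    (z.1 = t *: p.1 + (1 - t) *: q.1)%R ->
    (forall x, z.2 x = t * p.2 x + (1 - t) * q.2 x)%R ->
    forall a b : R, h p <= a%:E -> h q <= b%:E ->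
      h z <= (t * a + (1 - t) * b)%:E.

(* g^* o i :  (x, x^* ) |-> sup_{(z,z^* )} <z, x^*> + <x, z^*> - g(z, z^* ) *)
Definition conjI (g : X * dual -> \bar R) : X * dual -> \bar R :=
  fun p => ereal_sup [set ((pairing q.1 p.2 + pairing p.1 q.2)%:E - g q)
                     | q in [set: X * dual]].

Definition monotone (G : set (X * dual)) :=
  forall p q, G p -> G q ->
    (0 <= pairing p.1 p.2 - pairing p.1 q.2 - pairing q.1 p.2
          + pairing q.1 q.2)%R.

Definition maximal_monotone (G : set (X * dual)) :=
  monotone G /\ forall S, monotone S -> G `<=` S -> S = G.

Definition HT (G : set (X * dual)) (h : X * dual -> \bar R) :=
  [/\ lsc h, convexf h,
      (forall p, (pairing p.1 p.2)%:E <= h p) &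
      (forall p, G p -> h p = (pairing p.1 p.2)%:E)].

Definition Hall (h : X * dual -> \bar R) :=
  exists G, maximal_monotone G /\ HT G h.

Definition Aop (h : X * dual -> \bar R) : X * dual -> \bar R :=
  fun p => (2^-1)%:E * (h p + conjI h p).

Definition Hle h := Hall h /\ forall p, conjI h p <= h p.
Definition Hge h := Hall h /\ forall p, h p <= conjI h p.

Definition edom (g : X * dual -> \bar R) := [set p | g p < +oo].

Definition Ainf (h : X * dual -> \bar R) : X * dual -> \bar R :=
  fun p => limn (fun n => iter n Aop h p).

End Defs.

(* Main.v *)
Require Import Defs.
From HB Require Import structures.
From mathcomp Require Import all_boot all_order all_algebra.
From mathcomp Require Import all_classical all_reals all_analysis.
Import Order.TTheory GRing.Theory Num.Theory.
Local Open Scope classical_set_scope.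
Local Open Scope ereal_scope.


From HB Require Import structures.
From mathcomp Require Import all_boot all_order all_algebra.
From mathcomp Require Import all_classical all_reals all_analysis.
From mathcomp Require Import ring lra.
Import Order.TTheory GRing.Theory Num.Theory.
Import numFieldNormedType.Exports.
Set Implicit Arguments. Unset Strict Implicit.
Local Open Scope classical_set_scope.
Local Open Scope ring_scope.

Section Aux.
Variables (R : realType) (X : normedModType R).
Implicit Types (f g : dual X) (x y : X).

Lemma dual0 f : f 0 = 0.
Proof.
case: (dfunP f) => lin _; have := lin 1 0 0.
rewrite scaler0 addr0 mul1r; lra.
Qed.

Lemma dualZ f a x : f (a *: x) = a * f x.
Proof. by case: (dfunP f) => lin _; have := lin a x 0; rewrite addr0 dual0 addr0. Qed.

Lemma dualD f x y : f (x + y) = f x + f y.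
Proof. by case: (dfunP f) => lin _; have := lin 1 x y; rewrite scale1r mul1r. Qed.

Lemma dualB f x y : f (x - y) = f x - f y.
Proof.
have := dualD f (x - y) y; rewrite subrK => ->; by rewrite addrK.
Qed.

Lemma dual_bound f : exists M, 0 <= M /\ forall x, `|f x| <= M * `|x|.
Proof.
case: (dfunP f) => _ [M HM]; exists `|M|; split => // x.
apply: (le_trans (HM x)); by rewrite ler_wpM2r // real_ler_norm // num_real.
Qed.

Lemma ddist_bound f g x : `|f x - g x| <= ddist f g * `|x|.
Proof.
have [Mf [Mf0 HMf]] := dual_bound f; have [Mg [Mg0 HMg]] := dual_bound g.
set S := [set `|f x - g x| | x in [set x : X | `|x| <= 1]].
have hS : has_sup S.
  split; first by exists (`|f 0 - g 0|); exists 0 => //=; rewrite normr0.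
  exists (Mf + Mg) => _ [y /= y1 <-].
  apply: (le_trans (ler_normB _ _)); apply: lerD.
    by apply: (le_trans (HMf y)); rewrite -[X in _ <= X]mulr1 ler_wpM2l.
  by apply: (le_trans (HMg y)); rewrite -[X in _ <= X]mulr1 ler_wpM2l.
have [->|x0] := eqVneq x 0; first by rewrite !dual0 subrr normr0 normr0 mulr0.
have nx : 0 < `|x| by rewrite normr_gt0.
have Hu : S (`|x|^-1 * `|f x - g x|).
  exists (`|x|^-1 *: x); last by rewrite !dualZ -mulrBr normrM ger0_norm // invr_ge0 ltW.
  rewrite /= normrZ ger0_norm; [by rewrite mulVf ?gt_eqF|by rewrite invr_ge0 ltW].
have := sup_upper_bound hS Hu.
by rewrite -ler_pdivrMr // mulrC.
Qed.

End Aux.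

Section Conj.
Variables (R : realType) (X : normedModType R).
Local Notation Y := (X * dual X)%type.
Local Open Scope ereal_scope.
Implicit Types (g h : Y -> \bar R) (p q : Y).

Definition pii (p : Y) : R := pairing p.1 p.2.
Definition Lp (p q : Y) : R := (pairing q.1 p.2 + pairing p.1 q.2)%R.

Lemma LpC p q : Lp p q = Lp q p.
Proof. by rewrite /Lp addrC. Qed.

Lemma hlfE (r : R) : (2^-1)%:E * r%:E = (r / 2)%:E.
Proof. by rewrite -EFinM mulrC. Qed.

Lemma hlfy : (2^-1)%:E * +oo = +oo :> \bar R.
Proof. by rewrite mulry gtr0_sg ?mul1e // invr_gt0. Qed.

Lemma hlf_le x y : x <= y -> (2^-1)%:E * x <= (2^-1)%:E * y :> \bar R.
Proof. by apply: lee_wpmul2l; rewrite lee_fin invr_ge0. Qed.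

Lemma conjI_ge g p q : (Lp p q)%:E - g q <= conjI g p.
Proof. by apply: ereal_sup_ubound; exists q. Qed.

Lemma conjI_le g p a : (forall q, (Lp p q)%:E - g q <= a) -> conjI g p <= a.
Proof. by move=> H; apply: ge_ereal_sup => _ [q _ <-]; apply: H. Qed.

Lemma conjI_anti f g : (forall p, f p <= g p) -> forall p, conjI g p <= conjI f p.
Proof.
move=> fg p; apply: conjI_le => q; apply: le_trans (conjI_ge f p q).
by apply: leeB.
Qed.

Lemma conjI2 g p : conjI (conjI g) p <= g p.
Proof.
apply: conjI_le => q; have := conjI_ge g q p; rewrite LpC.
case: (g p) => [r| |]; case: (conjI g q) => [c| |] //=; rewrite ?leey ?leNye //.
by rewrite !lee_fin; lra.
Qed.

Lemma sub_hlf (x : R) a b : -oo < a -> -oo < b ->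
  x%:E - (2^-1)%:E * (a + b) <= (2^-1)%:E * ((x%:E - a) + (x%:E - b)).
Proof.
case: a => [a| |] //; case: b => [b| |] // _ _;
  rewrite /= ?hlfE ?hlfy ?leNye // lee_fin; lra.
Qed.


Lemma conjI_Aop g p : (forall q, -oo < g q) -> (forall q, -oo < conjI g q) ->
  conjI (Aop g) p <= Aop g p.
Proof.
move=> g0 c0; apply: (@le_trans _ _ ((2^-1)%:E * (conjI g p + conjI (conjI g) p))).
  apply: conjI_le => q; rewrite {1}/Aop; have H := sub_hlf (Lp p q) (g0 q) (c0 q). apply: le_trans H _.
  by apply: hlf_le; apply: leeD; apply: conjI_ge.
by rewrite /Aop [g p + _]addeC; apply: hlf_le; apply: leeD2l; apply: conjI2.
Qed.


Definition dlin_fun (a b : R) (f g : dual X) : X -> R := fun x => (a * f x + b * g x)%R.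

Lemma dlinP a b (f g : dual X) : is_dual_fun (dlin_fun a b f g).
Proof.
split.
  by move=> c x y; rewrite /dlin_fun !dualD !dualZ; ring.
have [Mf [Mf0 HMf]] := dual_bound f; have [Mg [Mg0 HMg]] := dual_bound g.
exists (`|a| * Mf + `|b| * Mg)%R => x; rewrite /dlin_fun.
apply: (le_trans (ler_normD _ _)); rewrite !normrM mulrDl -!mulrA.
by apply: lerD; apply: ler_wpM2l => //.
Qed.

Definition dlin a b (f g : dual X) : dual X := Dual (dlinP a b f g).

Lemma dlinE a b (f g : dual X) x : dlin a b f g x = (a * f x + b * g x)%R.
Proof. by []. Qed.

Lemma conjI_lsc g : lsc (conjI g).
Proof.
move=> p r /ereal_sup_gt [_ [q _ <-] rlt].
case Hg: (g q) rlt => [gam| |] rlt; last first.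
- exists 1%R => // q' _ _; apply: (lt_le_trans _ (conjI_ge g q' q)).
  by rewrite Hg /= ltry.
- by rewrite /= ltNge leNye in rlt.
rewrite -EFinB lte_fin in rlt.
set eps := (Lp p q - gam - r)%R.
have eps0 : (0 < eps)%R by rewrite /eps /Lp; lra.
have [M [M0 HM]] := dual_bound q.2.
have den0 : (0 < `|q.1| + M + 1)%R.
  by apply: ltr_wpDl; [apply: addr_ge0|].
set d := (eps / (`|q.1| + M + 1))%R.
have d0 : (0 < d)%R by apply: divr_gt0.
have E : (d * `|q.1| + M * d + d = eps)%R.
  by rewrite /d; field; apply: lt0r_neq0.
exists d => // q' h1 h2; apply: (lt_le_trans _ (conjI_ge g q' q)).
rewrite Hg -EFinB lte_fin.
have A : (`|q'.2 q.1 - p.2 q.1| <= d * `|q.1|)%R.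
  apply: (le_trans (ddist_bound _ _ _)); apply: ler_wpM2r => //; exact: ltW.
have B : (`|q.2 q'.1 - q.2 p.1| <= M * d)%R.
  rewrite -dualB; apply: (le_trans (HM _)); apply: ler_wpM2l => //; exact: ltW.
have : (Lp p q - Lp q' q <= d * `|q.1| + M * d)%R.
  rewrite /Lp /pairing.
  move: A B; rewrite !ler_norml => /andP[A1 A2] /andP[B1 B2]; lra.
move: rlt E; rewrite /eps /Lp => rlt E H; lra.
Qed.

Lemma conjI_convex g : convexf (conjI g).
Proof.
move=> p q z t /andP[t0 t1] hz1 hz2 a b hp hq; apply: conjI_le => w.
have A := le_trans (conjI_ge g p w) hp; have B := le_trans (conjI_ge g q w) hq.
have Lz : Lp z w = (t * Lp p w + (1 - t) * Lp q w)%R.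
  by rewrite /Lp /pairing hz2 hz1 dualD !dualZ; ring.
move: A B; case: (g w) => [gam| |] //=; rewrite ?leNye //.
rewrite -!EFinB !lee_fin Lz => A B.
have A' : (t * (Lp p w - gam) <= t * a)%R by apply: ler_wpM2l.
have B' : ((1 - t) * (Lp q w - gam) <= (1 - t) * b)%R by apply: ler_wpM2l; lra.
lra.
Qed.

Lemma conjI_pi (G : set Y) h : maximal_monotone G -> (forall p, G p -> h p = (pii p)%:E) ->
  forall p, (pii p)%:E <= conjI h p.
Proof.
move=> [monG maxG] hG p; rewrite leNgt; apply/negP => Hlt.
have key a : G a -> (0 < pii p + pii a - Lp p a)%R.
  move=> Ga; have := le_lt_trans (conjI_ge h p a) Hlt.
  by rewrite hG // -EFinB lte_fin; lra.
have mon : Defs.monotone (G `|` [set p]).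
  move=> a b [Ga|->] [Gb|->]; first exact: monG.
  - by have := key _ Ga; rewrite /Lp /pii /pairing; lra.
  - by have := key _ Gb; rewrite /Lp /pii /pairing; lra.
  - by rewrite /pairing; lra.
have Gp : G p by rewrite -(maxG _ mon (@subsetUl _ _ _)); right.
by have := key _ Gp; rewrite /Lp /pii; lra.
Qed.

Lemma conjI_G (G : set Y) h : convexf h -> (forall p, (pii p)%:E <= h p) ->
  (forall p, G p -> h p = (pii p)%:E) -> forall p, G p -> conjI h p = (pii p)%:E.
Proof.
move=> hconv hpi hG p Gp; apply/le_anti/andP; split; last first.
  apply: le_trans (conjI_ge h p p); rewrite hG // -EFinB lee_fin /Lp /pii; lra.
apply: conjI_le => q; have := hpi q; case Hq: (h q) => [beta| |] //=; last first.
  by rewrite leNye.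
move=> hb; rewrite -EFinB lee_fin leNgt; apply/negP => Hc.
set c := (Lp p q - pii p - beta)%R.
have c0 : (0 < c)%R by rewrite /c; lra.
set K := (pii q - Lp p q + pii p)%R.
have den0 : (0 < c + `|K| + 1)%R by apply: ltr_wpDl => //; apply: addr_ge0 => //; apply: ltW.
set t := (c / (c + `|K| + 1))%R.
have t0 : (0 < t)%R by apply: divr_gt0.
have E : (t * c + t * `|K| + t = c)%R by rewrite /t; field; apply: lt0r_neq0.
have tc0 : (0 < t * c)%R by apply: mulr_gt0.
have t1 : (t <= 1)%R.
  by rewrite /t ler_pdivrMr // mul1r; have := normr_ge0 K; lra.
set z : Y := ((t *: q.1 + (1 - t) *: p.1)%R, dlin t (1 - t) q.2 p.2).
have T01 : (0 <= t <= 1)%R by apply/andP; split=> //; apply: ltW.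
have hq' : h q <= beta%:E by rewrite Hq.
have hp' : h p <= (pii p)%:E by rewrite hG.
have hz := hconv q p z t T01 erefl (fun x => erefl) beta (pii p) hq' hp'.
have := le_trans (hpi z) hz; rewrite lee_fin.
have -> : pii z = (t * (t * pii q + (1 - t) * q.2 p.1) +
    (1 - t) * (t * p.2 q.1 + (1 - t) * pii p))%R.
  by rewrite /pii /pairing /= /dlin_fun !dualD !dualZ.
move=> H.
have H2 : (0 <= t * (- c - t * K))%R.
  move: H; rewrite /c /K /Lp /pii /pairing; move=> H; nra.
have H3 : (0 <= - c - t * K)%R by rewrite (pmulr_rge0 _ t0) in H2.
have H4 : (- (t * `|K|) <= t * K)%R.
  rewrite -mulrN; apply: ler_wpM2l; [exact: ltW|].
  by rewrite lerNl -normrN ler_norm.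
clear -E H3 H4 t0 tc0; lra.
Qed.

End Conj.

Section Aop.
Variables (R : realType) (X : normedModType R).
Local Notation Y := (X * dual X)%type.
Local Open Scope ereal_scope.
Implicit Types (f g h : Y -> \bar R) (p q : Y).

Lemma split_lt (r : R) (x y : \bar R) : -oo < x -> -oo < y ->
  r%:E < (2^-1)%:E * (x + y) ->
  exists r1 r2 : R, [/\ r1%:E < x, r2%:E < y & (r1 + r2 = 2 * r)%R].
Proof.
case: x => [a| |] //; case: y => [b| |] // _ _.
- rewrite -EFinD hlfE lte_fin => H.
  exists (a - ((a + b) / 2 - r))%R, (b - ((a + b) / 2 - r))%R.
  by split; rewrite ?lte_fin; [lra|lra|field].
- move=> _; exists (a - 1)%R, (2 * r - a + 1)%R.
  by split; rewrite ?lte_fin ?ltry //; [lra|ring].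
- move=> _; exists (2 * r - b + 1)%R, (b - 1)%R.
  by split; rewrite ?lte_fin ?ltry //; [lra|ring].
- move=> _; exists r, r; split; rewrite ?ltry //; ring.
Qed.

Lemma join_lt (r r1 r2 : R) (x y : \bar R) : r1%:E < x -> r2%:E < y ->
  (r1 + r2 = 2 * r)%R -> r%:E < (2^-1)%:E * (x + y).
Proof.
case: x => [a| |] //; case: y => [b| |] //; rewrite ?lte_fin => H1 H2 E;
  rewrite ?addey ?addye // -?EFinD ?hlfE ?hlfy ?ltry // ?lte_fin; lra.
Qed.

Lemma lsc_avg f g : lsc f -> lsc g -> (forall p, -oo < f p) -> (forall p, -oo < g p) ->
  lsc (fun p => (2^-1)%:E * (f p + g p)).
Proof.
move=> lf lg f0 g0 p r H.
have [r1 [r2 [H1 H2 E]]] := split_lt (f0 p) (g0 p) H.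
have [d1 d10 Hd1] := lf p r1 H1; have [d2 d20 Hd2] := lg p r2 H2.
exists (Order.min d1 d2); first by rewrite lt_min d10 d20.
move=> q; rewrite !lt_min => /andP[a1 a2] /andP[b1 b2].
exact: join_lt (Hd1 q a1 b1) (Hd2 q a2 b2) E.
Qed.

Lemma convex_avg f g : convexf f -> convexf g -> (forall p, -oo < f p) ->
  (forall p, -oo < g p) -> convexf (fun p => (2^-1)%:E * (f p + g p)).
Proof.
move=> cf cg f0 g0 p q z t T01 hz1 hz2 a b.
have := f0 p; have := g0 p; have := f0 q; have := g0 q.
case Fp: (f p) => [fp| |] //; case Gp: (g p) => [gp| |] //;
  rewrite ?addey ?addye // ?hlfy ?leye_eq //.
case Fq: (f q) => [fq| |] //; case Gq: (g q) => [gq| |] //;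
  rewrite ?addey ?addye // ?hlfy ?leye_eq // -!EFinD !hlfE !lee_fin => _ _ _ _ ha hb.
have Hf := cf p q z t T01 hz1 hz2 fp fq (ltac:(by rewrite Fp)) (ltac:(by rewrite Fq)).
have Hg := cg p q z t T01 hz1 hz2 gp gq (ltac:(by rewrite Gp)) (ltac:(by rewrite Gq)).
have := f0 z; have := g0 z; move: Hf Hg.
case: (f z) => [fz| |] //; case: (g z) => [gz| |] //; rewrite !lee_fin => Hf Hg _ _.
idtac.
move/andP: T01 => [t0 t1].
have A : (t * ((fp + gp) / 2) <= t * a)%R by apply: ler_wpM2l.
have B : ((1 - t) * ((fq + gq) / 2) <= (1 - t) * b)%R by apply: ler_wpM2l; lra.
lra.
Qed.

End Aop.

Section Main.
Variables (R : realType) (X : normedModType R).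
Local Notation Y := (X * dual X)%type.
Local Open Scope ereal_scope.
Implicit Types (f g h : Y -> \bar R) (p q : Y) (G : set Y).

Lemma HT_Ny G h : HT G h -> forall p, -oo < h p.
Proof. by case=> _ _ hpi _ p; apply: lt_le_trans (hpi p); rewrite ltNyr. Qed.

Lemma HT_conj G h : maximal_monotone G -> HT G h -> HT G (conjI h).
Proof.
move=> mG [l c hpi hG]; split.
- exact: conjI_lsc.
- exact: conjI_convex.
- exact: conjI_pi mG hG.
- exact: conjI_G c hpi hG.
Qed.

Lemma avg_ge (a : R) x y : a%:E <= x -> a%:E <= y -> a%:E <= (2^-1)%:E * (x + y).
Proof.
case: x => [x| |] //; case: y => [y| |] //; rewrite ?lee_fin => H1 H2;
  rewrite ?addey ?addye // -?EFinD ?hlfE ?hlfy ?leey // ?lee_fin; lra.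
Qed.

Lemma HT_Aop G h : maximal_monotone G -> HT G h -> HT G (Aop h).
Proof.
move=> mG hh; have hc := HT_conj mG hh.
case: (hh) => [l c hpi hG]; case: (hc) => [l' c' hpi' hG']; split.
- exact: lsc_avg l l' (HT_Ny hh) (HT_Ny hc).
- exact: convex_avg c c' (HT_Ny hh) (HT_Ny hc).
- by move=> p; apply: avg_ge; [apply: hpi|apply: hpi'].
- move=> p Gp; rewrite /Aop hG // hG' // -EFinD hlfE; congr (_%:E); by field.
Qed.

Lemma HT_iter G h : maximal_monotone G -> HT G h -> forall n, HT G (iter n (@Aop R X) h).
Proof. by move=> mG hh; elim=> [|n IH] //=; apply: HT_Aop. Qed.

Lemma Hle_Aop G h : maximal_monotone G -> HT G h -> forall p, conjI (Aop h) p <= Aop h p.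
Proof. move=> mG hh p; apply: conjI_Aop; [exact: HT_Ny hh|exact: HT_Ny (HT_conj mG hh)]. Qed.

Lemma hlfNy : (2^-1)%:E * -oo = -oo :> \bar R.
Proof. by rewrite mulrNy gtr0_sg ?mul1e // invr_gt0. Qed.

Lemma avg_le (x y : \bar R) : y <= x -> (2^-1)%:E * (x + y) <= x.
Proof.
case: x => [x| |]; case: y => [y| |] => //= H.
- by rewrite -EFinD hlfE lee_fin; rewrite lee_fin in H; lra.
- by rewrite addeNy hlfNy leNye.
- by rewrite leey.
- by rewrite leey.
- by rewrite leey.
- by rewrite hlfNy.
Qed.

Lemma Aop_le h : (forall p, conjI h p <= h p) -> forall p, Aop h p <= h p.
Proof. by move=> H p; apply: avg_le. Qed.

Lemma edom_avg (x y : \bar R) : -oo < x -> -oo < y ->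
  ((2^-1)%:E * (x + y) < +oo) = (x < +oo) && (y < +oo).
Proof.
case: x => [x| |] //; case: y => [y| |] //= _ _;
  rewrite ?addey ?addye // -?EFinD ?hlfE ?hlfy ?ltry //.
Qed.

End Main.

Section Seq.
Variables (R : realType) (X : normedModType R).
Local Notation Y := (X * dual X)%type.
Local Open Scope ereal_scope.
Variables (G : set Y) (h : Y -> \bar R).
Hypotheses (mG : maximal_monotone G) (hh : HT G h).

Lemma edom_Aop (g : Y -> \bar R) : (forall p, -oo < g p) -> (forall p, -oo < conjI g p) ->
  edom (Aop g) = edom g `&` edom (conjI g).
Proof.
move=> g0 c0; apply/seteqP; split => p; rewrite /edom /= /Aop edom_avg //.
  by move/andP.
by move=> [-> ->].
Qed.

Lemma edom_Aop_le (g : Y -> \bar R) : (forall p, -oo < g p) -> (forall p, -oo < conjI g p) ->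
  (forall p, conjI g p <= g p) -> edom (Aop g) = edom g.
Proof.
move=> g0 c0 cg; rewrite edom_Aop //; apply/seteqP; split => p; rewrite /edom /=.
  by case.
by move=> H; split => //; apply: le_lt_trans (cg p) H.
Qed.

Let a n := iter n.+1 (@Aop R X) h.

Lemma a_HT n : HT G (a n).
Proof. exact: HT_iter mG hh n.+1. Qed.

Lemma a_Hle n p : conjI (a n) p <= a n p.
Proof. exact: Hle_Aop mG (HT_iter mG hh n) p. Qed.

Lemma a_dec n p : a n.+1 p <= a n p.
Proof. exact: Aop_le (a_Hle n) p. Qed.

Lemma a_mono p : nonincreasing_seq (fun n => a n p).
Proof. by apply/nonincreasing_seqP => n; exact: a_dec. Qed.

Lemma b_mono p : nondecreasing_seq (fun n => conjI (a n) p).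
Proof.
apply/nondecreasing_seqP => n; apply: conjI_anti => q; exact: a_dec.
Qed.

Lemma b_le_a n m p : conjI (a n) p <= a m p.
Proof.
have [nm|mn] := leqP n m.
  exact: le_trans (b_mono p nm) (a_Hle m p).
exact: le_trans (a_Hle n p) (a_mono p (ltnW mn)).
Qed.

Lemma Ainf_cvg0 p : (fun n => a n p) @ \oo --> ereal_inf (range (fun n => a n p)).
Proof. exact: ereal_nonincreasing_cvgn (a_mono p). Qed.

Lemma Ainf_inf p : Ainf h p = ereal_inf (range (fun n => a n p)).
Proof.
rewrite /Ainf; apply: cvg_lim => //.
by rewrite -cvg_shiftS; exact: Ainf_cvg0.
Qed.

Lemma Ainf_cvg p : (fun n => iter n (@Aop R X) h p) @ \oo --> Ainf h p.
Proof. by rewrite Ainf_inf -cvg_shiftS; exact: Ainf_cvg0. Qed.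

Lemma Ainf_le n p : Ainf h p <= a n p.
Proof. by rewrite Ainf_inf; apply: ereal_inf_lbound; exists n. Qed.

Lemma b_le_Ainf n p : conjI (a n) p <= Ainf h p.
Proof. by rewrite Ainf_inf; apply: le_ereal_inf_tmp => _ [m _ <-]; apply: b_le_a. Qed.

Lemma edom_a n : edom (a n) = edom h `&` edom (conjI h).
Proof.
elim: n => [|n IH].
  exact: edom_Aop (HT_Ny hh) (HT_Ny (HT_conj mG hh)).
rewrite -IH; exact: edom_Aop_le (HT_Ny (a_HT n)) (HT_Ny (HT_conj mG (a_HT n))) (a_Hle n).
Qed.

Lemma edom_Ainf : edom (Ainf h) = edom h `&` edom (conjI h).
Proof.
rewrite -(edom_a 0); apply/seteqP; split => p; rewrite /edom /=.
  rewrite Ainf_inf => /ereal_inf_lt [_ [n _ <-]] Hn.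
  have Hn' : edom (a n) p by exact: Hn.
  by rewrite (edom_a n) -(edom_a 0) in Hn'.
by move=> H; apply: le_lt_trans (Ainf_le 0 p) H.
Qed.

Lemma a_fin n p : (edom h `&` edom (conjI h)) p -> a n p \is a fin_num.
Proof.
move=> Hp; rewrite fin_numElt (HT_Ny (a_HT n)) /=.
by have : edom (a n) p by rewrite edom_a.
Qed.

Lemma b_fin n p : (edom h `&` edom (conjI h)) p -> conjI (a n) p \is a fin_num.
Proof.
move=> Hp; rewrite fin_numElt (HT_Ny (HT_conj mG (a_HT n))) /=.
by apply: le_lt_trans (a_Hle n p) _; have : edom (a n) p by rewrite edom_a.
Qed.

Lemma b_cvg p : (edom h `&` edom (conjI h)) p ->
  (fun n => conjI (a n) p) @ \oo --> Ainf h p.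
Proof.
move=> Hp.
have Lfin : Ainf h p \is a fin_num.
  rewrite fin_numElt; apply/andP; split.
    exact: lt_le_trans (HT_Ny (HT_conj mG (a_HT 0)) p) (b_le_Ainf 0 p).
  by apply: le_lt_trans (Ainf_le 0 p) _; have : edom (a 0) p by rewrite edom_a.
set L := fine (Ainf h p).
have ca : (fun n => fine (a n p)) @ \oo --> L.
  have := @Ainf_cvg0 p; rewrite -Ainf_inf -(fineK Lfin) => /fine_cvgP [_ H]; exact: H.
have ca1 : (fun n => fine (a n.+1 p)) @ \oo --> L.
  by have := ca; rewrite -cvg_shiftS.
have cb : ((fun n => fine (a n.+1 p)) + (fun n => fine (a n.+1 p)) -
    (fun n => fine (a n p)))%R @ \oo --> (L + L - L)%R.
  by apply: cvgB => //; apply: cvgD.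
rewrite addrK in cb.
have rel n : fine (a n.+1 p) = ((fine (a n p) + fine (conjI (a n) p)) / 2)%R.
  rewrite -[a n.+1 p]/(Aop (a n) p) /Aop; move: (a_fin n Hp) (b_fin n Hp).
  case: (a n p) => [x| |] //; case: (conjI (a n) p) => [y| |] // _ _.
  by rewrite -EFinD hlfE.
rewrite -(fineK Lfin); apply/fine_cvgP; split.
  by apply: nearW => n; exact: b_fin.
suff -> : fine \o (fun n => conjI (a n) p) =
   ((fun n => fine (a n.+1 p)) + (fun n => fine (a n.+1 p)) - (fun n => fine (a n p)))%R.
  exact: cb.
apply/funext => n /=; rewrite -[RHS]/(fine (a n.+1 p) + fine (a n.+1 p) - fine (a n p))%R rel; by field.
Qed.

Lemma Ainf_ge_pi p : (pii p)%:E <= Ainf h p.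
Proof.
case: (a_HT 0) => _ _ hpi _; case: (HT_conj mG (a_HT 0)) => _ _ hpi' _.
exact: le_trans (hpi' p) (b_le_Ainf 0 p).
Qed.

Lemma Ainf_G p : G p -> Ainf h p = (pii p)%:E.
Proof.
move=> Gp; apply/le_anti/andP; split; last exact: Ainf_ge_pi.
by case: (a_HT 0) => _ _ _ hG; rewrite -(hG p Gp); apply: Ainf_le.
Qed.

Lemma Ainf_convex : convexf (Ainf h).
Proof.
move=> p q z t T01 hz1 hz2 al be hp hq; apply/lee_addgt0Pr => e e0.
have : Ainf h p < (al + e)%:E by apply: le_lt_trans hp _; rewrite lte_fin; lra.
rewrite Ainf_inf => /ereal_inf_lt [_ [n1 _ <-]] H1.
have : Ainf h q < (be + e)%:E by apply: le_lt_trans hq _; rewrite lte_fin; lra.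
rewrite Ainf_inf => /ereal_inf_lt [_ [n2 _ <-]] H2.
set N := maxn n1 n2.
have H1' : a N p <= (al + e)%:E.
  exact: le_trans (a_mono p (leq_maxl n1 n2)) (ltW H1).
have H2' : a N q <= (be + e)%:E.
  exact: le_trans (a_mono q (leq_maxr n1 n2)) (ltW H2).
case: (a_HT N) => _ c _ _.
apply: le_trans (Ainf_le N z) _; apply: le_trans (c p q z t T01 hz1 hz2 _ _ H1' H2') _.
by rewrite -EFinD lee_fin; lra.
Qed.

Lemma Ainf_HT : lsc (Ainf h) -> HT G (Ainf h).
Proof.
move=> l; split => //; [exact: Ainf_convex|exact: Ainf_ge_pi|exact: Ainf_G].
Qed.

Lemma Ainf_fix : Aop (Ainf h) = Ainf h.
Proof.
apply/funext => p.
have c1 : conjI (Ainf h) p <= Ainf h p.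
  rewrite [X in _ <= X]Ainf_inf; apply: le_ereal_inf_tmp => _ [n _ <-].
  apply: le_trans (conjI2 (a n) p).
  by apply: conjI_anti => q; apply: b_le_Ainf.
have c0 : -oo < conjI (Ainf h) p.
  apply: lt_le_trans (HT_Ny (HT_conj mG (a_HT 0)) p) _.
  by apply: conjI_anti => q; apply: Ainf_le.
have A0 : -oo < Ainf h p by apply: lt_le_trans (Ainf_ge_pi p); rewrite ltNyr.
rewrite /Aop; case E: (Ainf h p) => [x| |] //.
  have Hp : (edom h `&` edom (conjI h)) p by rewrite -edom_Ainf /edom /= E ltry.
  have c2 : Ainf h p <= conjI (Ainf h) p.
    apply: (cvge_to_le (b_cvg Hp)); apply: nearW => n.
    by apply: conjI_anti => q; apply: Ainf_le.
  have -> : conjI (Ainf h) p = x%:E by apply/le_anti; rewrite -E c1 c2.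
  by rewrite -EFinD hlfE; congr (_%:E); field.
by rewrite addye ?hlfy // gt_eqF // -E.
by rewrite E in A0.
Qed.

End Seq.

Section Fin.
Local Open Scope ereal_scope.
Lemma avg_fix (R : realType) (x y : \bar R) : -oo < x -> -oo < y ->
  (x < +oo -> y = x) -> (2^-1)%:E * (x + y) = x.
Proof.
case: x => [x| |] //; case: y => [y| |] // _ _ H.
- by rewrite (H (ltry _)) -EFinD hlfE; congr (_%:E); field.
- by case: (H (ltry x)).
- by rewrite addye // hlfy.
- by rewrite addye // hlfy.
Qed.

Lemma avg_fix_inv (R : realType) (x y : \bar R) : -oo < x -> x < +oo -> -oo < y ->
  (2^-1)%:E * (x + y) = x -> y = x.
Proof.
case: x => [x| |] //; case: y => [y| |] // _ _ _.
- rewrite -EFinD hlfE => -[E]; congr (_%:E); lra.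
- by rewrite addey // hlfy.
Qed.

End Fin.
Unset Implicit Arguments.
Local Open Scope classical_set_scope.
Local Open Scope ereal_scope.

Theorem theorem2p3 (R : realType) (X : completeNormedModType R)
  (HX : reflexive_space X) :
  (* (i) *)
  (forall h : X * dual X -> \bar R, Hall h -> Hle (Aop h) /\ Hge (conjI (Aop h))) /\
  (* (ii) *)
  (forall h : X * dual X -> \bar R, (Hall h /\ Aop h = h) <->
             (Hle h /\ forall p, edom h p -> conjI h p = h p)) /\
  (* (iii) *)
  (forall h : X * dual X -> \bar R, Hall h -> forall n : nat, (0 < n)%N ->
     edom (iter n (@Aop R X) h) = edom h `&` edom (conjI h)) /\
  (* (iv) *)
  (forall h : X * dual X -> \bar R, Hall h ->
     (forall n : nat, (0 < n)%N ->
        Hle (iter n (@Aop R X) h) /\ Hge (conjI (iter n (@Aop R X) h))) /\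
     (forall (n : nat) p, (0 < n)%N ->
        iter n.+1 (@Aop R X) h p <= iter n (@Aop R X) h p /\
        conjI (iter n (@Aop R X) h) p <= conjI (iter n.+1 (@Aop R X) h) p) /\
     (forall p, (fun n => iter n (@Aop R X) h p) @ \oo --> Ainf h p) /\
     edom (Ainf h) = edom h `&` edom (conjI h) /\
     (lsc (Ainf h) -> Hall (Ainf h) /\ Aop (Ainf h) = Ainf h)) /\
  (* (v) *)
  (forall h : X * dual X -> \bar R, Hall h -> forall (n : nat) p, (0 < n)%N ->
     conjI (iter n (@Aop R X) h) p <= Ainf h p /\
     Ainf h p <= iter n (@Aop R X) h p) /\
  (* (vi) *)
  (forall h : X * dual X -> \bar R, Hall h -> forall p, (edom h `&` edom (conjI h)) p ->
     (fun n => conjI (iter n (@Aop R X) h) p) @ \oo --> Ainf h p) /\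
  (* (vii) *)
  (forall (G : set (X * dual X)) (h : X * dual X -> \bar R), maximal_monotone G -> HT G h ->
     lsc (Ainf h) -> HT G (Ainf h)).
Proof.
split.
  move=> h [G [mG hh]]; split.
    split; [exists G; split => //; exact: HT_Aop | exact: Hle_Aop mG hh].
  split; first by exists G; split => //; exact: HT_conj mG (HT_Aop mG hh).
  by move=> p; apply: conjI_anti; exact: Hle_Aop mG hh.
split.
  move=> h; split.
    move=> [[G [mG hh]] hfix]; split.
      split; first by exists G.
      by move=> p; have := Hle_Aop mG hh p; rewrite hfix.
    move=> p Hp; apply: avg_fix_inv.
    - exact: HT_Ny hh p.
    - exact: Hp.
    - exact: HT_Ny (HT_conj mG hh) p.
    - by have := congr1 (fun f => f p) hfix.
  move=> [[[G [mG hh]] _] Hdom]; split; first by exists G.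
  apply/funext => p; apply: avg_fix.
  - exact: HT_Ny hh p.
  - exact: HT_Ny (HT_conj mG hh) p.
  - by move=> H; apply: Hdom.
split.
  by move=> h [G [mG hh]] [//|n] _; exact: edom_a mG hh n.
split.
  move=> h [G [mG hh]]; split; [|split; [|split; [|split]]].
  - move=> [//|n] _; split.
      split; [exists G; split => //; exact: HT_iter mG hh n.+1| exact: a_Hle mG hh n].
    split; first by exists G; split => //; exact: HT_conj mG (HT_iter mG hh n.+1).
    by move=> p; apply: conjI_anti; exact: a_Hle mG hh n.
  - move=> [//|n] p _; split; first exact: a_dec mG hh n p.
    by apply: conjI_anti => q; exact: a_dec mG hh n q.
  - by move=> p; exact: Ainf_cvg mG hh p.
  - exact: edom_Ainf mG hh.
  - by move=> l; split; [exists G; split => //; exact: Ainf_HT mG hh l| exact: Ainf_fix mG hh].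
split.
  move=> h [G [mG hh]] [//|n] p _.
  by split; [exact: b_le_Ainf mG hh n p| exact: Ainf_le mG hh n p].
split.
  move=> h [G [mG hh]] p Hp; rewrite -(cvg_shiftS _ (nbhs (Ainf h p))). exact (b_cvg mG hh Hp).
by move=> G h mG hh l; exact: Ainf_HT mG hh l.
Qed.
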